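(* Let $\Omega\subset B(\mathcal H)^d$ be an NC domain and $f:\Omega\to B(\mathcal H)^r$ an NC function. Suppose $x\in\Omega$, $h\in B(\mathcal H)^d$, and $s:\mathcal H\to\mathcal H^{(2)}$ is a bounded invertible linear map such that $s^{-1}\begin{bmatrix}x&h\\0&x\end{bmatrix}s\in\Omega$. Then $$f\left(s^{-1}\begin{bmatrix}x&h\\0&x\end{bmatrix}s\right)=s^{-1}\begin{bmatrix}f(x)&Df(x)[h]\\0&f(x)\end{bmatrix}s.$$
   Context: Throughout, $\mathcal H$ is an infinite-dimensional separable complex Hilbert space, $B(\mathcal H)$ the bounded operators with the operator norm, and $\mathcal H^{(l)}$ ($l\in\mathbb N\cup\{\infty\}$) the direct sum of $l$ copies of $\mathcal H$. $B(\mathcal H)^d$ has the norm $\|x\|=\max_i\|x^i\|$. Operations on tuples are componentwise: for bounded invertible linear $s:\mathcal H\to\mathcal H^{(l)}$ and $z\in B(\mathcal H^{(l)})^d$, $s^{-1}zs=(s^{-1}z^1s,\dots,s^{-1}z^ds)$; for a finite or countable uniformly bounded sequence $x_1,x_2,\dots$ in $B(\mathcal H)^d$ of length $l$, $\bigoplus_n x_n\in B(\mathcal H^{(l)})^d$ has $i$-th entry $\bigoplus_n x_n^i$; a block matrix $\begin{bmatrix}x&h\\0&y\end{bmatrix}$ with $x,h,y\in B(\mathcal H)^d$ is the element of $B(\mathcal H^{(2)})^d$ with $i$-th entry $\begin{bmatrix}x^i&h^i\\0&y^i\end{bmatrix}$. A set is unitarily invariant if $u^*xu$ lies in it for each of its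 elements $x$ and each unitary $u\in B(\mathcal H)$. NC domain: $\Omega\subset B(\mathcal H)^d$ is an NC domain if there are subsets $\Omega_1,\Omega_2,\dots$ of $\Omega$ with (1) $\Omega_k\subset\mathrm{int}\,\Omega_{k+1}$ (norm interior) and $\Omega=\bigcup_k\Omega_k$; (2) each $\Omega_k$ norm-bounded and unitarily invariant; (3) for every sequence $x_1,x_2,\dots$ in $\Omega_k$ of length $l\in\mathbb N\cup\{\infty\}$ there is a unitary $u:\mathcal H\to\mathcal H^{(l)}$ with $u^{-1}(\bigoplus_n x_n)u\in\Omega_k$. NC function: $f:\Omega\to B(\mathcal H)^r$ on an NC domain is NC if whenever $x,y\in\Omega$ and $s:\mathcal H\to\mathcal H^{(2)}$ is bounded, linear, invertible with $s^{-1}\begin{bmatrix}x&0\\0&y\end{bmatrix}s\in\Omega$, then $f\Big(s^{-1}\begin{bmatrix}x&0\\0&y\end{bmatrix}s\Big)=s^{-1}\begin{bmatrix}f(x)&0\\0&f(y)\end{bmatrix}s$. Every NC function is Fréchet differentiable; $Df(x)[h]$ denotes its Fréchet derivative at $x$ applied to $h$. *)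

(* Defs.v *)
From HB Require Import structures.
From mathcomp Require Import all_boot all_order all_algebra.
From mathcomp Require Import complex.
From mathcomp Require Import all_classical all_reals all_analysis.
Import numFieldNormedType.Exports.
Import GRing.Theory Num.Theory.

Set Implicit Arguments.
Unset Strict Implicit.
Unset Printing Implicit Defensive.

Local Open Scope ring_scope.
Local Open Scope classical_set_scope.

Section NCDefs.
Context {R : realType}.
Local Notation C := R[i].
Context (H : normedModType C).

Definition series_to (u : nat -> C) (L : C) : Prop :=
  series u @ \oo --> (L : Num.ClosedField.sort _).

Definition inner_product (ip : H -> H -> C) : Prop :=
  (forall (a : C) (u v w : H), ip (a *: u + v) w = a * ip u w + ip v w) /\
  (forall u v : H, ip u v = (ip v u)^*) /\
  (forall v : H, ip v v = `|v| ^+ 2).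

Definition separable_space : Prop :=
  exists D : nat -> H, forall (v : H) (e : C), 0 < e -> exists n, `|v - D n| < e.

Definition infinite_dimensional (ip : H -> H -> C) : Prop :=
  forall n : nat, exists e : 'I_n -> H,
    forall i j, ip (e i) (e j) = (i == j)%:R.

Definition linop (T : H -> H) : Prop :=
  forall (a : C) (u v : H), T (a *: u + v) = a *: T u + T v.

Definition bounded_op (T : H -> H) : Prop :=
  linop T /\ exists M : C, 0 <= M /\ forall v, `|T v| <= M * `|v|.

Definition tup (d : nat) := 'I_d -> H -> H.

Definition btup d (x : tup d) : Prop := forall i, bounded_op (x i).

(* ||x|| <= M for the norm max_i ||x^i||  (operator norm) *)
Definition tnorm_le d (x : tup d) (M : C) : Prop :=
  forall i v, `|x i v| <= M * `|v|.

Definition tadd d (x y : tup d) : tup d := fun i v => x i v + y i v.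
Definition tsub d (x y : tup d) : tup d := fun i v => x i v - y i v.
Definition tscale d (a : C) (x : tup d) : tup d := fun i v => a *: x i v.
Definition tzero d : tup d := fun _ _ => 0.

Definition norm_interior d (A : set (tup d)) : set (tup d) :=
  fun x => btup x /\ exists e : C, 0 < e /\
    forall y, btup y -> tnorm_le (tsub y x) e -> A y.

Definition norm_bounded d (A : set (tup d)) : Prop :=
  exists M : C, forall x, A x -> tnorm_le x M.

(* unitaries u : H -> H (for a unitary, u^* = u^{-1}) *)
Definition unitary (u : H -> H) : Prop :=
  linop u /\ (forall v, `|u v| = `|v|) /\ (forall y, exists v, u v = y).

Definition unitarily_invariant d (A : set (tup d)) : Prop :=
  forall x u w, A x -> unitary u -> (forall v, w (u v) = v) ->
    A (fun i v => w (x i (u v))).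

(* lengths: Some m encodes l = m+1 (finite), None encodes l = oo.
   H^(l) is realised as sequences nat -> H vanishing off the index set,
   with square-summable norms. *)
Definition idx (l : option nat) (n : nat) : bool :=
  if l is Some m then (n < m.+1)%N else true.

Definition in_Hl (l : option nat) (z : nat -> H) : Prop :=
  (forall n, ~~ idx l n -> z n = 0) /\
  exists L : C, series_to (fun n => `|z n| ^+ 2) L.

Definition unitary_l (l : option nat) (u : H -> nat -> H) : Prop :=
  (forall (a : C) v w, u (a *: v + w) = (fun n => a *: u v n + u w n)) /\
  (forall v, in_Hl l (u v)) /\
  (forall v, series_to (fun n => `|u v n| ^+ 2) (`|v| ^+ 2)) /\
  (forall z, in_Hl l z -> exists v, u v = z).

Definition dsum d (l : option nat) (x : nat -> tup d) (i : 'I_d) (z : nat -> H)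
  : nat -> H := fun n => if idx l n then x n i (z n) else 0.

Definition nc_domain d (Om : set (tup d)) : Prop :=
  (forall x, Om x -> btup x) /\
  exists Omk : nat -> set (tup d),
    (forall k, Omk k `<=` Om) /\
    (Om = \bigcup_k Omk k) /\
    (forall k, Omk k `<=` norm_interior (Omk k.+1)) /\
    (forall k, norm_bounded (Omk k)) /\
    (forall k, unitarily_invariant (Omk k)) /\
    (forall k (l : option nat) (x : nat -> tup d),
        (forall n, idx l n -> Omk k (x n)) ->
        exists (u : H -> nat -> H) (w : (nat -> H) -> H),
          unitary_l l u /\ (forall v, w (u v) = v) /\
          (forall z, in_Hl l z -> u (w z) = z) /\
          Omk k (fun i v => w (dsum l x i (u v)))).

Definition sq2 (p : H * H) : C := `|p.1| ^+ 2 + `|p.2| ^+ 2.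

Definition binv2 (s : H -> H * H) (t : H * H -> H) : Prop :=
  (forall (a : C) u v, s (a *: u + v) = a *: s u + s v) /\
  (exists M : C, forall v, sq2 (s v) <= M ^+ 2 * `|v| ^+ 2) /\
  (forall (a : C) p q, t (a *: p + q) = a *: t p + t q) /\
  (exists M : C, forall p, `|t p| ^+ 2 <= M ^+ 2 * sq2 p) /\
  (forall v, t (s v) = v) /\ (forall p, s (t p) = p).

(* the block upper-triangular tuple [[x, h], [0, y]] in B(H^(2))^d *)
Definition blk d (x h y : tup d) (i : 'I_d) (p : H * H) : H * H :=
  (x i p.1 + h i p.2, y i p.2).

(* s^{-1} z s, with t = s^{-1} *)
Definition conj2 d (s : H -> H * H) (t : H * H -> H) (z : 'I_d -> H * H -> H * H)
  : tup d := fun i v => t (z i (s v)).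

Definition nc_function d r (Om : set (tup d)) (f : tup d -> tup r) : Prop :=
  forall x y s t, Om x -> Om y -> binv2 s t ->
    Om (conj2 s t (blk x (@tzero d) y)) ->
    f (conj2 s t (blk x (@tzero d) y)) = conj2 s t (blk (f x) (@tzero r) (f y)).

Definition frechet_deriv d r (Om : set (tup d)) (f : tup d -> tup r)
    (x : tup d) (L : tup d -> tup r) : Prop :=
  (forall h, btup h -> btup (L h)) /\
  (forall (a : C) h k, btup h -> btup k ->
       L (tadd (tscale a h) k) = tadd (tscale a (L h)) (L k)) /\
  (exists M : C, forall h c, btup h -> tnorm_le h c -> tnorm_le (L h) (M * c)) /\
  (forall e : C, 0 < e -> exists del : C, 0 < del /\
     forall k, btup k -> Om (tadd x k) ->
       forall c : C, 0 <= c -> c < del -> tnorm_le k c ->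
         tnorm_le (tsub (tsub (f (tadd x k)) (f x)) (L k)) (e * c)).

End NCDefs.

(* Main.v *)
Require Import Defs.
From HB Require Import structures.
From mathcomp Require Import all_boot all_order all_algebra.
From mathcomp Require Import complex.
From mathcomp Require Import all_classical all_reals all_analysis.
From mathcomp Require Import ring lra zify.
Import numFieldNormedType.Exports.
Import Order.TTheory GRing.Theory Num.Theory.
Local Open Scope ring_scope.
Local Open Scope classical_set_scope.
Local Open Scope complex_scope.

Section Arith.
Context {R : realType}.
Local Notation C := R[i].
Lemma Cge0E (x : C) : 0 <= x -> exists y : R, 0 <= y /\ x = y%:C.
Proof.
move=> hx; exists (complex.Re x); split; last by rewrite RRe_real // ger0_real.
by rewrite -ler0c RRe_real // ger0_real.
Qed.
Lemma two_C : (2 : C) = (2 : R)%:C. Proof. by rewrite rmorph_nat. Qed.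
Ltac liftC := rewrite ?two_C; do 6 rewrite -?rmorphM -?rmorphD -?rmorphXn -?rmorphN -?rmorphB; rewrite ?lecR ?ltcR.

Lemma sq2T_le (a b c : C) : 0 <= a -> 0 <= b -> 0 <= c ->
  (a + c * b) ^+ 2 + b ^+ 2 <= ((2 + 2 * c) ^+ 2) * (a ^+ 2 + b ^+ 2).
Proof.
move=> /Cge0E[a' [ha ->]] /Cge0E[b' [hb ->]] /Cge0E[c' [hc ->]].
liftC.
have h1 : 0 <= (a' - c' * b') ^+ 2 by apply: sqr_ge0.
have h3 : 0 <= c' * (a' ^+ 2 + b' ^+ 2) by apply: mulr_ge0 => //; nra.
have h4 : 0 <= c' * c' * (a' ^+ 2 + b' ^+ 2) by apply: mulr_ge0 => //; nra.
nra.
Qed.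

Lemma sqle (a b : C) : 0 <= a -> a <= b -> a ^+ 2 <= b ^+ 2.
Proof.
move=> ha hab; have hb := le_trans ha hab.
move: ha hb hab => /Cge0E[a' [ha ->]] /Cge0E[b' [hb ->]]; liftC; nra.
Qed.

Lemma normM2 {x y M : C} : 0 <= x -> 0 <= y -> x <= M ^+ 2 * y -> x <= `|M| ^+ 2 * y.
Proof.
move=> hx hy h; have h0 := le_trans hx h.
by rewrite -(ger0_norm hy) -normrX -normrM ger0_norm.
Qed.

Lemma sqrt_le1 (x y M : C) : 0 <= x -> 0 <= y -> x ^+ 2 <= M ^+ 2 * y ^+ 2 -> x <= `|M| * y.
Proof.
move=> hx hy h; have := normM2 (exprn_ge0 2 hx) (exprn_ge0 2 hy) h.
have hM := normr_ge0 M.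
move: hx hy hM => /Cge0E[x' [hx ->]] /Cge0E[y' [hy ->]] /Cge0E[m' [hm ->]]; liftC.
move=> h2; have hmy : 0 <= m' * y' by apply: mulr_ge0.
nra.
Qed.

Lemma sqrt_le2 (x a b M : C) : 0 <= x -> 0 <= a -> 0 <= b ->
  x ^+ 2 <= M ^+ 2 * (a ^+ 2 + b ^+ 2) -> x <= `|M| * (a + b).
Proof.
move=> hx ha hb h.
have := normM2 (exprn_ge0 2 hx) (addr_ge0 (exprn_ge0 2 ha) (exprn_ge0 2 hb)) h.
have hM := normr_ge0 M.
move: hx ha hb hM => /Cge0E[x' [hx ->]] /Cge0E[a' [ha ->]] /Cge0E[b' [hb ->]] /Cge0E[m' [hm ->]]; liftC.
move=> h2; have hmy : 0 <= m' * (a' + b') by apply: mulr_ge0 => //; nra.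
have hab : 0 <= m' * m' * a' * b' by apply: mulr_ge0 => //; apply: mulr_ge0 => //; nra.
nra.
Qed.

Lemma series_ev (u : nat -> C) N : (forall n, (N <= n)%N -> u n = 0) ->
  series_to u (\sum_(0 <= k < N) u k).
Proof.
move=> hu A hA; have hL := nbhs_singleton hA.
exists N => // n /= hn.
rewrite /series /= (@big_cat_nat _ _ _ N) //= [X in _ + X]big1_seq ?addr0 //.
move=> k /andP[_]; rewrite mem_index_iota => /andP[hk _]; exact: hu.
Qed.
Lemma series_uniq (u : nat -> C) L1 L2 : series_to u L1 -> series_to u L2 -> L1 = L2.
Proof. move=> h1 h2; rewrite /series_to in h1 h2.
have hs := @norm_hausdorff C C^o.
by rewrite -(cvg_lim hs h1) -(cvg_lim hs h2). Qed.
Lemma sum2 (u : nat -> C) : \sum_(0 <= k < 2) u k = u 0%N + u 1%N.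
Proof. by rewrite big_nat_recr //= big_nat_recr //= big_geq // add0r. Qed.

Lemma Cgt0E (x : C) : 0 < x -> exists y : R, 0 < y /\ x = y%:C.
Proof.
move=> hx; have [y [y0 ey]] := Cge0E _ (ltW hx); exists y; split => //.
by rewrite -ltcR -ey.
Qed.
Lemma natC (m : nat) : (m%:R : C) = (m%:R : R)%:C. Proof. by rewrite rmorph_nat. Qed.

Lemma small_pos (A B : C) : 0 <= A -> 0 < B ->
  exists N : nat, forall m, (N <= m)%N -> (m.+1%:R)^-1 * A <= B.
Proof.
move=> /Cge0E[a [a0 ->]] /Cgt0E[b [b0 ->]].
exists (Num.Def.archi_bound (a / b)) => m hm.
have hq : a / b < m.+1%:R.
  apply: lt_le_trans (archi_boundP _) _; first by apply: divr_ge0 => //; apply: ltW.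
  by rewrite ler_nat; apply: leq_trans hm _.
rewrite natC -fmorphV -rmorphM lecR.
have hm0 : (0 : R) < m.+1%:R by rewrite ltr0Sn.
rewrite mulrC -(ler_pM2r hm0) -mulrA mulVf ?mulr1; last by rewrite gt_eqF.
by move: hq; rewrite ltr_pdivrMr // mulrC => /ltW.
Qed.

Lemma zero_small (a K : C) : 0 <= a ->
  (forall e : C, 0 < e -> e <= 1 -> a <= e * K) -> a = 0.
Proof.
move=> a0 h; have aK : a <= K by rewrite -[K]mul1r; apply: h => //; apply: ltr01.
have K0 := le_trans a0 aK.
move: a0 K0 h aK => /Cge0E[a' [a0 ->]] /Cge0E[k [k0 ->]] h aK.
case: (ler0P a') => [ha|ha].
  by have -> : a' = 0 by apply/le_anti/andP.
exfalso.
have D0 : (0 : R) < k + a' + 1 by rewrite ltr_wpDl // addr_ge0.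
have := h ((a' / (k + a' + 1))%:C).
have -> : (1 : C) = (1 : R)%:C by rewrite rmorph1.
rewrite -rmorphM !ltcR !lecR.
have e0 : 0 < a' / (k + a' + 1) by rewrite divr_gt0.
have e1 : a' / (k + a' + 1) <= 1.
  by rewrite ler_pdivrMr // mul1r; lra.
move=> /(_ e0 e1); rewrite mulrAC ler_pdivlMr // => hh.
nra.
Qed.

Section Ops.
Context {H : normedModType C}.

Lemma lin_add (T : H -> H) u v : linop T -> T (u + v) = T u + T v.
Proof. by rewrite /linop => hT; rewrite -{1}[u]scale1r hT scale1r. Qed.
Lemma lin_0 (T : H -> H) : linop T -> T 0 = 0.
Proof. move=> hT; have h := lin_add T 0 0 hT; rewrite addr0 in h.
by apply: (addrI (T 0)); rewrite -h addr0. Qed.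
Lemma lin_scale (T : H -> H) a u : linop T -> T (a *: u) = a *: T u.
Proof. by move=> hT; have hT' := hT; rewrite /linop in hT'; rewrite -[a *: u]addr0 hT' lin_0 // addr0. Qed.
Lemma lin_opp (T : H -> H) u : linop T -> T (- u) = - T u.
Proof. by move=> hT; rewrite -scaleN1r lin_scale // scaleN1r. Qed.
Lemma lin_sub (T : H -> H) u v : linop T -> T (u - v) = T u - T v.
Proof. by move=> hT; rewrite lin_add // lin_opp. Qed.

Definition TS (S : H -> H) (p : H * H) : H * H := (p.1 + S p.2, p.2).


Lemma binv2_s_bound (s : H -> H * H) (t : H * H -> H) : binv2 s t -> exists M : C, 0 <= M /\
  forall v, `|(s v).1| <= M * `|v| /\ `|(s v).2| <= M * `|v|.
Proof.
rewrite /binv2 => -[_ [[M hM] _]]; exists `|M|; split => // v; split.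
- apply: sqrt_le1 => //; apply: le_trans (hM v); rewrite /sq2 lerDl.
  by apply: exprn_ge0.
- apply: sqrt_le1 => //; apply: le_trans (hM v); rewrite /sq2 lerDr.
  by apply: exprn_ge0.
Qed.

Lemma binv2_t_bound (s : H -> H * H) (t : H * H -> H) : binv2 s t -> exists M : C, 0 <= M /\
  forall p, `|t p| <= M * (`|p.1| + `|p.2|).
Proof.
rewrite /binv2 => -[_ [_ [_ [[M hM] _]]]]; exists `|M|; split => // p.
by apply: sqrt_le2 => //; apply: hM.
Qed.

Lemma binv2_t_sub (s : H -> H * H) (t : H * H -> H) p q : binv2 s t -> t (p - q) = t p - t q.
Proof.
rewrite /binv2 => -[_ [_ [ht _]]].
have tD : forall p q, t (p + q) = t p + t q.
  by move=> p' q'; rewrite -{1}[p']scale1r ht scale1r.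
have t0 : t 0 = 0.
  by have h := tD 0 0; rewrite addr0 in h; apply: (addrI (t 0)); rewrite -h addr0.
have tN : forall r, t (- r) = - t r.
  by move=> r; rewrite -[- r]addr0 -scaleN1r ht t0 addr0 scaleN1r.
by rewrite tD tN.
Qed.

Lemma TS_lin (S : H -> H) (a : C) p q : linop S ->
  TS S (a *: p + q) = a *: TS S p + TS S q.
Proof.
rewrite /linop => hS; case: p => [x1 x2]; case: q => [y1 y2]; rewrite /TS /=.
rewrite hS.
have -> : a *: (x1 + S x2, x2) + (y1 + S y2, y2) = (a *: (x1 + S x2) + (y1 + S y2), a *: x2 + y2) by [].
by congr (_, _); rewrite scalerDr addrACA.
Qed.

Lemma linopN {S : H -> H} : linop S -> linop (fun v => - S v).
Proof. by rewrite /linop => hS a u v; rewrite hS opprD scalerN. Qed.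

Lemma sq2_TS (S : H -> H) (c : C) q : 0 <= c -> (forall v, `|S v| <= c * `|v|) ->
  sq2 (TS S q) <= (2 + 2 * c) ^+ 2 * sq2 q.
Proof.
move=> c0 hc; rewrite /sq2 /TS /=.
apply: le_trans (sq2T_le _ _ _ (normr_ge0 q.1) (normr_ge0 q.2) c0).
apply: lerD => //; apply: sqle => //.
by apply: le_trans (ler_normD _ _) _; apply: lerD.
Qed.

Lemma binv2_T (s : H -> H * H) (t : H * H -> H) (S : H -> H) (c : C) :
  binv2 s t -> linop S -> 0 <= c -> (forall v, `|S v| <= c * `|v|) ->
  binv2 (fun v => TS S (s v)) (fun p => t (TS (fun v => - S v) p)).
Proof.
move=> hst hS c0 hc.
have hst' := hst; move: hst' => [sL [[Ms hMs] [tL [[Mt hMt] [ts st]]]]].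
have hc' : forall v, `|- S v| <= c * `|v| by move=> v; rewrite normrN.
have hSN := linopN hS.
split; [|split; [|split; [|split; [|split]]]].
- by move=> a u v; rewrite sL TS_lin.
- exists ((2 + 2 * c) * Ms) => v; apply: le_trans (sq2_TS _ _ _ c0 hc) _.
  rewrite exprMn -[_ * Ms ^+ 2 * _]mulrA; apply: ler_wpM2l => //.
  by apply: exprn_ge0; apply: addr_ge0 => //; apply: mulr_ge0.
- by move=> a p q; rewrite TS_lin // tL.
- exists (`|Mt| * (2 + 2 * c)) => p.
  have h1 := hMt (TS (fun v => - S v) p).
  have h2 : `|t (TS (fun v => - S v) p)| ^+ 2 <= `|Mt| ^+ 2 * sq2 (TS (fun v => - S v) p).
    exact: normM2 (exprn_ge0 2 (normr_ge0 _)) (addr_ge0 (exprn_ge0 2 (normr_ge0 _)) (exprn_ge0 2 (normr_ge0 _))) h1.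
  apply: le_trans h2 _; rewrite exprMn -[`|Mt| ^+ 2 * _ * _]mulrA; apply: ler_wpM2l; first by apply: exprn_ge0.
  exact: sq2_TS.
- by move=> v; rewrite /TS /= addrK -surjective_pairing ts.
- by move=> p; rewrite st /TS /= addrNK -surjective_pairing.
Qed.

Lemma conj2_TS d (s : H -> H * H) (t : H * H -> H) (S : H -> H) (A Cm B : tup H d) :
  (forall i, linop (A i)) ->
  conj2 (fun v => TS S (s v)) (fun p => t (TS (fun v => - S v) p)) (blk A Cm B)
  = conj2 s t (blk A (fun i v => A i (S v) + Cm i v - S (B i v)) B).
Proof.
move=> hA; apply: funext => i; apply: funext => v; rewrite /conj2 /blk /TS /=.
by congr t; congr (_, _); rewrite lin_add // !addrA.
Qed.

Lemma btup_lin d (x : tup H d) i : btup x -> linop (x i).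
Proof. by move=> /(_ i) []. Qed.

Lemma F1core d r (Om : set (tup H d)) (f : tup H d -> tup H r)
  (s : H -> H * H) (t : H * H -> H) (S : H -> H) (c : C) (A B : tup H d) :
  (forall x, Om x -> btup x) -> (forall y, Om y -> btup (f y)) -> nc_function Om f ->
  Om A -> Om B -> binv2 s t -> linop S -> 0 <= c -> (forall v, `|S v| <= c * `|v|) ->
  Om (conj2 s t (blk A (fun i v => A i (S v) + @tzero _ H d i v - S (B i v)) B)) ->
  f (conj2 s t (blk A (fun i v => A i (S v) + @tzero _ H d i v - S (B i v)) B)) =
  conj2 s t (blk (f A) (fun i v => f A i (S v) + @tzero _ H r i v - S (f B i v)) (f B)).
Proof.
move=> hOm hf nc OA OB hst hS c0 hc.
rewrite -conj2_TS; last by move=> i; apply: btup_lin; apply: hOm.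
rewrite -conj2_TS; last by move=> i; apply: btup_lin; apply: hf.
move=> OP; apply: nc => //; exact: binv2_T hst hS c0 hc.
Qed.

Definition pr (p : H * H) : nat -> H :=
  fun n => if n == 0%N then p.1 else if n == 1%N then p.2 else 0.

Lemma sq2_sum (z : nat -> H) : \sum_(0 <= k < 2) `|z k| ^+ 2 = sq2 (z 0%N, z 1%N).
Proof. by rewrite sum2. Qed.

Lemma in_pr p : in_Hl (Some 1%N) (pr p).
Proof.
split; first by move=> n /=; rewrite /pr; case: n => [|[|n]].
exists (sq2 p); have -> : sq2 p = \sum_(0 <= k < 2) `|pr p k| ^+ 2.
  by rewrite sq2_sum /pr /= -surjective_pairing.
by apply: series_ev => -[|[|n]] // _; rewrite /pr /= normr0 expr0n.
Qed.

Lemma DS2 d (Omk : nat -> set (tup H d)) k (A B : tup H d) :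
  (forall k (l : option nat) (x : nat -> tup H d),
        (forall n, idx l n -> Omk k (x n)) ->
        exists (u : H -> nat -> H) (w : (nat -> H) -> H),
          unitary_l l u /\ (forall v, w (u v) = v) /\
          (forall z, in_Hl l z -> u (w z) = z) /\
          Omk k (fun i v => w (dsum l x i (u v)))) ->
  Omk k A -> Omk k B ->
  exists (s : H -> H * H) (t : H * H -> H), binv2 s t /\
    (forall v, sq2 (s v) = `|v| ^+ 2) /\ (forall p, `|t p| ^+ 2 = sq2 p) /\
    Omk k (conj2 s t (blk A (@tzero _ H d) B)).
Proof.
move=> hds OA OB.
pose xs := fun n : nat => if n == 0%N then A else B.
have [u [w [[uL [uH [uN uS]]] [wu [uw hD]]]]] : exists (u : H -> nat -> H) (w : (nat -> H) -> H),
          unitary_l (Some 1%N) u /\ (forall v, w (u v) = v) /\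
          (forall z, in_Hl (Some 1%N) z -> u (w z) = z) /\
          Omk k (fun i v => w (dsum (Some 1%N) xs i (u v))).
  by apply: hds => -[|n] _; rewrite /xs.
have uz : forall v n, (1 < n)%N -> u v n = 0.
  by move=> v n hn; case: (uH v) => + _; apply; rewrite /= -leqNgt.
have uinj : forall a b, u a = u b -> a = b by move=> a b e; rewrite -(wu a) e wu.
pose s := fun v => (u v 0%N, u v 1%N).
pose t := fun p => w (pr p).
have hs : forall v, sq2 (s v) = `|v| ^+ 2.
  move=> v; rewrite /s -(sq2_sum (u v)).
  have h1 : series_to (fun n => `|u v n| ^+ 2) (\sum_(0 <= k < 2) `|u v k| ^+ 2).
    by apply: series_ev => n hn; rewrite uz ?normr0 ?expr0n.
  exact: series_uniq h1 (uN v).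
have prs : forall v, pr (s v) = u v.
  by move=> v; apply: funext => -[|[|n]] //; rewrite /pr /= uz.
have ht : forall p, `|t p| ^+ 2 = sq2 p.
  move=> p; have h1 := uN (t p); rewrite /t uw in h1; last exact: in_pr.
  apply: series_uniq h1 _.
  have -> : sq2 p = sq2 (pr p 0%N, pr p 1%N) by rewrite /pr /= -surjective_pairing.
  rewrite -(sq2_sum (pr p)).
  by apply: series_ev => -[|[|n]] // _; rewrite /pr /= normr0 expr0n.
exists s, t; split; last split => //; last split => //.
- split; [|split; [|split; [|split; [|split]]]].
  + by move=> a v1 v2; rewrite /s uL.
  + by exists 1 => v; rewrite hs expr1n mul1r.
  + move=> a p q; apply: uinj; rewrite /t uL !uw; try exact: in_pr.
    apply: funext => n.
    by rewrite /pr; case: ifP => _ //; case: ifP => _ //; rewrite scaler0 addr0.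
  + by exists 1 => p; rewrite ht expr1n mul1r.
  + by move=> v; rewrite /t prs wu.
  + by move=> p; rewrite /s /t uw; [rewrite /pr /= -surjective_pairing|exact: in_pr].
- suff -> : conj2 s t (blk A (@tzero _ H d) B) = (fun i v => w (dsum (Some 1%N) xs i (u v))) by [].
  apply: funext => i; apply: funext => v; rewrite /conj2 /t /s /blk /=; congr w.
  apply: funext => -[|[|n]]; rewrite /pr /dsum /xs /tzero //= ?addr0 //.
Qed.

Definition ds_hyp d (Omk : nat -> set (tup H d)) : Prop :=
  forall k (l : option nat) (x : nat -> tup H d),
        (forall n, idx l n -> Omk k (x n)) ->
        exists (u : H -> nat -> H) (w : (nat -> H) -> H),
          unitary_l l u /\ (forall v, w (u v) = v) /\
          (forall z, in_Hl l z -> u (w z) = z) /\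
          Omk k (fun i v => w (dsum l x i (u v))).
Arguments ds_hyp {d}.
Arguments DS2 {d Omk k A B}.
Arguments F1core {d r Om f s t S c A B}.

Lemma intertwine d r (Om : set (tup H d)) (Omk : nat -> set (tup H d))
  (f : tup H d -> tup H r) (k : nat) (A B : tup H d) (S : H -> H) (c : C) :
  (forall x, Om x -> btup x) -> (forall y, Om y -> btup (f y)) -> nc_function Om f ->
  (forall k, Omk k `<=` Om) -> ds_hyp Omk -> Omk k A -> Omk k B ->
  linop S -> 0 <= c -> (forall v, `|S v| <= c * `|v|) ->
  (forall i v, A i (S v) = S (B i v)) -> forall i v, f A i (S v) = S (f B i v).
Proof.
move=> hOm hf nc sub hds OA OB hS c0 hc hAB i y.
have [s [t [hst [_ [_ hD]]]]] := DS2 hds OA OB.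
have OD := sub _ _ hD.
have e1 : conj2 s t (blk A (fun i v => A i (S v) + @tzero _ H d i v - S (B i v)) B)
          = conj2 s t (blk A (@tzero _ H d) B).
  congr (conj2 s t (blk A _ B)); apply: funext => j; apply: funext => v.
  by rewrite hAB /tzero addr0 subrr.
have e2 := F1core hOm hf nc (sub _ _ OA) (sub _ _ OB) hst hS c0 hc.
rewrite e1 in e2; have e3 := e2 OD.
have e6 := nc A B s t (sub _ _ OA) (sub _ _ OB) hst OD.
rewrite e6 in e3.
have e4 := congr1 (fun F => s (F i (t (0, y)))) e3.
have [_ [_ [_ [_ [_ st]]]]] := hst.
rewrite /conj2 /= !st /blk /= in e4.
have e5 := congr1 fst e4; rewrite /= in e5.
by move/addrI: e5; rewrite /tzero addr0 => /esym/eqP; rewrite subr_eq0 => /eqP.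
Qed.

Lemma btup_bound d (x : tup H d) : btup x -> exists c : C, 0 <= c /\ tnorm_le x c.
Proof.
move=> hx.
have : forall i, exists M : C, 0 <= M /\ forall v, `|x i v| <= M * `|v|.
  by move=> i; case: (hx i) => _ [M [M0 hM]]; exists M.
move=> /choice [Mf hMf]; exists (\sum_i Mf i); split.
  by apply: sumr_ge0 => i _; case: (hMf i).
move=> i v; case: (hMf i) => _ h; apply: le_trans (h v) _.
apply: ler_wpM2r => //; rewrite (bigD1 i) //= lerDl.
by apply: sumr_ge0 => j _; case: (hMf j).
Qed.

Arguments btup_bound {d x}.
Arguments intertwine {d r Om Omk f k A B S c}.

Definition en (n : nat) (v : H) : nat -> H := fun m => if m == n then v else 0.

Lemma en_series n v : series_to (fun m => `|en n v m| ^+ 2) (`|v| ^+ 2).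
Proof.
have -> : `|v| ^+ 2 = \sum_(0 <= k < n.+1) `|en n v k| ^+ 2.
  rewrite big_nat_recr //= big1_seq ?add0r /en ?eqxx //.
  move=> m /andP[_]; rewrite mem_index_iota => /andP[_ hm].
  by rewrite ifN ?normr0 ?expr0n // neq_ltn hm.
apply: series_ev => m hm; rewrite /en ifN ?normr0 ?expr0n //.
by rewrite neq_ltn hm orbT.
Qed.

Lemma in_en n v : in_Hl None (en n v).
Proof. by split => //; exists (`|v| ^+ 2); apply: en_series. Qed.

Lemma sq_inj (a b : C) : 0 <= a -> 0 <= b -> a ^+ 2 = b ^+ 2 -> a = b.
Proof. by move=> ha hb /eqP; rewrite eqrXn2 // => /eqP. Qed.

Lemma bound_Omk d r (Om : set (tup H d)) (Omk : nat -> set (tup H d))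
  (f : tup H d -> tup H r) (k : nat) :
  (forall x, Om x -> btup x) -> (forall y, Om y -> btup (f y)) -> nc_function Om f ->
  (forall k, Omk k `<=` Om) -> ds_hyp Omk ->
  exists M : C, 0 <= M /\ forall z, Omk k z -> tnorm_le (f z) M.
Proof.
move=> hOm hf nc sub hds.
case: (pselect (exists M : C, 0 <= M /\ forall z, Omk k z -> tnorm_le (f z) M)) => // hn.
have hz : forall n : nat, exists z, Omk k z /\ ~ tnorm_le (f z) n%:R.
  move=> n; apply: contrapT => hc; apply: hn; exists n%:R; split => // z Oz.
  by apply: contrapT => hnt; apply: hc; exists z.
have [zs hzs] := choice hz.
have [u [w [[uL [uH [uN uS]]] [wu [uw hD]]]]] := hds k None zs (fun n _ => proj1 (hzs n)).
set Z := (fun i v => w (dsum None zs i (u v))) in hD.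
have [M0 [M00 hM0]] := btup_bound (hf _ (sub _ _ hD)).
have [m [m0 em]] := Cge0E _ M00.
pose n := Num.Def.archi_bound m.
have hmn : M0 <= n%:R.
  have -> : (n%:R : C) = (n%:R : R)%:C by rewrite rmorph_nat.
  by rewrite em lecR; apply: ltW; apply: archi_boundP.
exfalso; case: (hzs n) => Ozn; apply => i v.
pose S := fun v => w (en n v).
have uinj : forall a b, u a = u b -> a = b by move=> a b e; rewrite -(wu a) e wu.
have Siso : forall v, `|S v| = `|v|.
  move=> v'; apply: sq_inj => //; have h1 := uN (S v'); rewrite /S uw in h1; last exact: in_en.
  by apply: series_uniq h1 _; exact: en_series.
have Slin : linop S.
  move=> a v1 v2; apply: uinj; rewrite /S uL !uw; try exact: in_en.
  by apply: funext => m'; rewrite /en; case: ifP => _ //; rewrite scaler0 addr0.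
have Sb : forall v, `|S v| <= 1 * `|v| by move=> v0; rewrite Siso mul1r.
have hint : forall j v, Z j (S v) = S (zs n j v).
  move=> j v0; rewrite /Z /S uw; last exact: in_en.
  congr w; apply: funext => m'; rewrite /dsum /en /=.
  case: eqP => [->|_] //; rewrite lin_0 //; apply: btup_lin; apply: hOm; apply: (sub k).
  exact: (proj1 (hzs m')).
have e := intertwine hOm hf nc sub hds hD Ozn Slin ler01 Sb hint i v.
have -> : `|f (zs n) i v| = `|f Z i (S v)| by rewrite e Siso.
apply: le_trans (hM0 i (S v)) _; rewrite Siso.
by apply: ler_wpM2r.
Qed.


Lemma pair_lin (g : C) (p q : H * H) : g *: p + q = (g *: p.1 + q.1, g *: p.2 + q.2).
Proof. by case: p; case: q. Qed.

Lemma tcomb_btup d (a b : tup H d) (al be : C) : btup a -> btup b ->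
  btup (fun i v => al *: a i v + be *: b i v).
Proof.
move=> ha hb; have [ca [ca0 hca]] := btup_bound ha; have [cb [cb0 hcb]] := btup_bound hb.
move=> i; split.
  move=> g u v; have la := btup_lin _ _ i ha; have lb := btup_lin _ _ i hb.
  rewrite /linop in la lb; rewrite la lb.
  by rewrite !scalerDr !scalerA (mulrC al) (mulrC be) addrACA.
exists (`|al| * ca + `|be| * cb); split.
  by apply: addr_ge0; apply: mulr_ge0.
move=> v; apply: le_trans (ler_normD _ _) _; rewrite !normrZ mulrDl.
by apply: lerD; rewrite -mulrA; apply: ler_wpM2l.
Qed.

Lemma conj2_le d (s : H -> H * H) (t : H * H -> H) (a b c : tup H d) (Ms Mt ca cb cc : C) :
  (forall v, `|(s v).1| <= Ms * `|v| /\ `|(s v).2| <= Ms * `|v|) ->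
  (forall p, `|t p| <= Mt * (`|p.1| + `|p.2|)) -> 0 <= Ms -> 0 <= Mt ->
  0 <= ca -> 0 <= cb -> 0 <= cc ->
  tnorm_le a ca -> tnorm_le b cb -> tnorm_le c cc ->
  tnorm_le (conj2 s t (blk a b c)) (Mt * (Ms * (ca + cb + cc))).
Proof.
move=> hs ht Ms0 Mt0 ca0 cb0 cc0 ha hb hc i v; rewrite /conj2 /blk.
apply: le_trans (ht _) _; rewrite /= -mulrA; apply: ler_wpM2l => //.
case: (hs v) => h1 h2.
have e1 : `|a i (s v).1 + b i (s v).2| <= ca * (Ms * `|v|) + cb * (Ms * `|v|).
  apply: le_trans (ler_normD _ _) _; apply: lerD.
    by apply: le_trans (ha _ _) _; apply: ler_wpM2l.
  by apply: le_trans (hb _ _) _; apply: ler_wpM2l.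
have e2 : `|c i (s v).2| <= cc * (Ms * `|v|).
  by apply: le_trans (hc _ _) _; apply: ler_wpM2l.
apply: le_trans (lerD e1 e2) _.
by rewrite -!mulrDl mulrA [_ * Ms]mulrC -mulrA.
Qed.

Lemma conj2_diff d (s : H -> H * H) (t : H * H -> H) (a b c a' b' c' : tup H d) i v :
  binv2 s t ->
  conj2 s t (blk a b c) i v - conj2 s t (blk a' b' c') i v =
  conj2 s t (blk (tsub a a') (tsub b b') (tsub c c')) i v.
Proof.
move=> hst; rewrite /conj2 -(binv2_t_sub _ _ _ _ hst); congr t.
by rewrite /blk /tsub; congr (_, _) => /=; rewrite opprD addrACA.
Qed.

Lemma conj2_btup d (s : H -> H * H) (t : H * H -> H) (a b c : tup H d) :
  binv2 s t -> btup a -> btup b -> btup c -> btup (conj2 s t (blk a b c)).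
Proof.
move=> hst ha hb hc.
have [Ms [Ms0 hMs]] := binv2_s_bound _ _ hst.
have [Mt [Mt0 hMt]] := binv2_t_bound _ _ hst.
have [ca [ca0 hca]] := btup_bound ha; have [cb [cb0 hcb]] := btup_bound hb.
have [cc [cc0 hcc]] := btup_bound hc.
have hst' := hst; move: hst' => [sL [_ [tL _]]].
move=> i; split.
  move=> g u v; rewrite /conj2 sL /blk -tL; congr t.
  have la := btup_lin _ _ i ha; have lb := btup_lin _ _ i hb; have lc := btup_lin _ _ i hc.
  rewrite /linop in la lb lc.
  rewrite (pair_lin g (s u) (s v)) /= la lb lc (pair_lin g _ (_, _)) /=.
  by congr (_, _); rewrite scalerDr addrACA.
exists (Mt * (Ms * (ca + cb + cc))); split.
  by apply: mulr_ge0 => //; apply: mulr_ge0 => //; rewrite !addr_ge0.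
by apply: conj2_le.
Qed.

Arguments conj2_le {d s t a b c Ms Mt ca cb cc}.
Arguments conj2_diff {d s t a b c a' b' c'} i v.
Arguments conj2_btup {d s t a b c}.
Arguments tcomb_btup {d a b} al be.
Arguments bound_Omk {d r Om Omk f} k.

Lemma btup0 d : btup (@tzero _ H d).
Proof.
move=> i; split; first by move=> a u v; rewrite /tzero scaler0 addr0.
by exists 0; split => // v; rewrite /tzero normr0 mul0r.
Qed.

Lemma fd_scale d r (Om : set (tup H d)) (f : tup H d -> tup H r) x L (g : C) (h : tup H d) :
  frechet_deriv Om f x L -> btup h -> forall i v, L (fun i v => g *: h i v) i v = g *: L h i v.
Proof.
move=> [_ [Ll _]] hh i v.
have L0 : forall i v, L (@tzero _ H d) i v = 0.
  move=> j u; have := Ll 1 _ _ (btup0 d) (btup0 d).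
  have -> : tadd (tscale 1 (@tzero _ H d)) (@tzero _ H d) = @tzero _ H d.
    by apply: funext => ?; apply: funext => ?; rewrite /tadd /tscale /tzero scaler0 addr0.
  move=> /(congr1 (fun F => F j u)); rewrite /tadd /tscale scale1r => e.
  by apply: (addrI (L (@tzero _ H d) j u)); rewrite -e addr0.
have := Ll g _ _ hh (btup0 d).
have -> : tadd (tscale g h) (@tzero _ H d) = (fun i v => g *: h i v).
  by apply: funext => ?; apply: funext => ?; rewrite /tadd /tscale /tzero addr0.
by move=> ->; rewrite /tadd /tscale L0 addr0.
Qed.

Lemma tnorm_mono d (x : tup H d) (a b : C) : tnorm_le x a -> a <= b -> tnorm_le x b.
Proof. by move=> hx ab i v; apply: le_trans (hx i v) _; apply: ler_wpM2r. Qed.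

Lemma tnorm_sub0 d (x : tup H d) : tnorm_le (tsub x x) 0.
Proof. by move=> i v; rewrite /tsub subrr normr0 mul0r. Qed.
End Ops.
End Arith.

Arguments ds_hyp {R H d} Omk.
Arguments DS2 {R H d Omk k A B}.
Arguments F1core {R H d r Om f s t S c A B}.
Arguments conj2_le {R H d s t a b c Ms Mt ca cb cc}.
Arguments conj2_diff {R H d s t a b c a' b' c'} i v.
Arguments conj2_btup {R H d s t a b c}.
Arguments tcomb_btup {R H d a b} al be.
Arguments bound_Omk {R H d r Om Omk f} k.
Arguments btup_bound {R H d x}.
Arguments fd_scale {R H d r Om f x L} g {h}.
Arguments tnorm_mono {R H d x a b}.
Arguments tnorm_sub0 {R H d}.

Theorem proposition3p3 (R : realType) (H : completeNormedModType R[i])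
  (ip : H -> H -> R[i]) (d r : nat)
  (Om : set (tup H d)) (f : tup H d -> tup H r)
  (Df : tup H d -> tup H r)
  (x h : tup H d) (s : H -> H * H) (t : H * H -> H) :
  inner_product ip -> separable_space H -> infinite_dimensional ip ->
  nc_domain Om ->
  (forall y, Om y -> btup (f y)) ->
  nc_function Om f ->
  frechet_deriv Om f x Df ->
  Om x -> btup h -> binv2 s t ->
  Om (conj2 s t (blk x h x)) ->
  f (conj2 s t (blk x h x)) = conj2 s t (blk (f x) (Df h) (f x)).
Proof.
move=> _ _ _ hdom hfb nc hfr Ox hh hst OY.
case: hdom => hOm [Omk [sub [eqU [hint [hbd [hui hds]]]]]].
have intr : forall k z, Omk k z -> exists e : R[i], 0 < e /\
    forall y, btup y -> tnorm_le (tsub y z) e -> Omk k.+1 y.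
  by move=> k z Oz; case: (hint k z Oz) => _ [e [e0 he]]; exists e.
have [kx _ Okx] : (\bigcup_k Omk k) x by rewrite -eqU.
set Y := conj2 s t (blk x h x) in OY *.
have [kY _ OkY] : (\bigcup_k Omk k) Y by rewrite -eqU.
have hds' : ds_hyp Omk by [].
have [ex [ex0 hex]] := intr _ _ Okx.
have [eY [eY0 heY]] := intr _ _ OkY.
have [s2 [t2 [hst2 [_ [_ hD0]]]]] := DS2 hds' OkY OkY.
have [eD [eD0 heD]] := intr _ _ hD0.
have [M1 [M10 hM1]] := bound_Omk kY.+1 hOm hfb nc sub hds'.
have [Ms [Ms0 hMs]] := binv2_s_bound _ _ hst.
have [Mt [Mt0 hMt]] := binv2_t_bound _ _ hst.
have [Ms2 [Ms20 hMs2]] := binv2_s_bound _ _ hst2.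
have [Mt2 [Mt20 hMt2]] := binv2_t_bound _ _ hst2.
have [ch [ch0 hch]] := btup_bound hh.
have hfr' := hfr; case: hfr' => Lbt [_ [_ Lfr]].
have hDh := Lbt h hh.
have [cD [cD0 hcD]] := btup_bound hDh.
set F := f x; set Dh := Df h.
apply: funext => i; apply: funext => v.
apply/eqP; rewrite -subr_eq0 -normr_eq0; apply/eqP.
apply: (zero_small _ ((Ms2 * (M1 * Mt2) + Mt * (Ms * (1 + ch))) * `|v|) (normr_ge0 _)).
move=> eps eps0 eps1.
have [del [del0 hdel]] := Lfr eps eps0.
set lam := eps^-1.
have lam0 : 0 < lam by rewrite invr_gt0.
have del2 : 0 < del / 2 by rewrite divr_gt0 // ltr0n.
have [N1 h1] := small_pos ch (del / 2) ch0 del2.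
have [N2 h2] := small_pos ch ex ch0 ex0.
have [N3 h3] := small_pos (Mt * (Ms * ch)) eY
   (mulr_ge0 Mt0 (mulr_ge0 Ms0 ch0)) eY0.
have [N4 h4] := small_pos (Mt2 * (Ms2 * ((1 + lam) * (Mt * (Ms * ch))))) eD
   (mulr_ge0 Mt20 (mulr_ge0 Ms20 (mulr_ge0 (addr_ge0 ler01 (ltW lam0)) (mulr_ge0 Mt0 (mulr_ge0 Ms0 ch0))))) eD0.
have [N5 h5] := small_pos (ch + cD) eps (addr_ge0 ch0 cD0) eps0.
pose m := (N1 + N2 + N3 + N4 + N5)%N.
have {h1}c1 := h1 m ltac:(by rewrite /m -!addnA leq_addr).
have {h2}c2 := h2 m ltac:(by rewrite /m -!addnA addnCA leq_addr).
have {h3}c3 := h3 m ltac:(by rewrite /m -!addnA !(addnCA _ N3) leq_addr).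
have {h4}c4 := h4 m ltac:(by rewrite /m -!addnA !(addnCA _ N4) leq_addr).
have {h5}c5 := h5 m ltac:(by rewrite /m leq_addl).
set tau := (m.+1%:R)^-1 in c1 c2 c3 c4 c5.
have tau0 : 0 < tau by rewrite invr_gt0 ltr0Sn.
have taunz : tau != 0 by rewrite gt_eqF.
have bx := hOm _ Ox.
pose xt := tadd x (tscale tau h).
have bxt : btup xt.
  have -> : xt = (fun i v => 1 *: x i v + tau *: h i v).
    by apply: funext => ?; apply: funext => ?; rewrite /xt /tadd /tscale scale1r.
  exact: tcomb_btup 1 tau bx hh.
have xth : tnorm_le (tsub xt x) (tau * ch).
  move=> j u; rewrite /tsub /xt /tadd /tscale addrC addKr normrZ gtr0_norm // -mulrA.
  by apply: ler_wpM2l; [apply: ltW|apply: hch].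
have Oxt : Om xt.
  apply: (sub kx.+1); apply: hex => //; apply: tnorm_mono xth _; exact: c2.
have hd2 : del / 2 < del.
  by rewrite ltr_pdivrMr ?ltr0n // ltr_pMr // ltr1n.
have hF : forall j u, `|f xt j u - F j u - tau *: Dh j u| <= eps * (tau * ch) * `|u|.
  move=> j u.
  have hk : btup (tscale tau h).
    have -> : tscale tau h = (fun i v => 0 *: h i v + tau *: h i v).
      by apply: funext => ?; apply: funext => ?; rewrite /tscale scale0r add0r.
    exact: (tcomb_btup 0 tau hh hh).
  have hk2 : tnorm_le (tscale tau h) (tau * ch).
    move=> j' u'; rewrite /tscale normrZ gtr0_norm // -mulrA.
    by apply: ler_wpM2l; [apply: ltW|apply: hch].
  have := hdel (tscale tau h) hk Oxt (tau * ch) (mulr_ge0 (ltW tau0) ch0) (le_lt_trans c1 hd2) hk2 j u.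
  by rewrite /tsub (fd_scale tau hfr hh).
have bY : btup Y := conj2_btup hst bx hh bx.
pose Yt := conj2 s t (blk xt h x).
have bYt : btup Yt := conj2_btup hst bxt hh bx.
pose yb := Mt * (Ms * (tau * ch + 0 + 0)).
have yb0 : 0 <= yb.
  by apply: mulr_ge0 => //; apply: mulr_ge0 => //; rewrite !addr0; apply: mulr_ge0 => //; apply: ltW.
have hYd : tnorm_le (tsub Yt Y) yb.
  move=> j u; rewrite /tsub (conj2_diff j u hst).
  apply: (conj2_le hMs hMt Ms0 Mt0 _ (lexx 0) (lexx 0) xth (tnorm_sub0 h) (tnorm_sub0 x) j u).
  by apply: mulr_ge0 => //; apply: ltW.
have ybe : yb = tau * (Mt * (Ms * ch)) by rewrite /yb; ring.
have OYt : Om Yt.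
  apply: (sub kY.+1); apply: heY => //; apply: tnorm_mono hYd _; by rewrite ybe.
pose S1 := fun u : H => tau^-1 *: u.
have S1lin : linop S1 by move=> a u w; rewrite /S1 scalerDr !scalerA mulrC.
have S1b : forall u, `|S1 u| <= tau^-1 * `|u|.
  by move=> u; rewrite /S1 normrZ gtr0_norm ?invr_gt0.
have eYt : conj2 s t (blk xt (fun j u => xt j (S1 u) + @tzero _ H d j u - S1 (x j u)) x) = Yt.
  congr (conj2 s t (blk xt _ x)); apply: funext => j; apply: funext => u.
  rewrite /xt /tadd /tscale /S1 /tzero (lin_scale (x j)); last exact: btup_lin.
  rewrite (lin_scale (h j)); last exact: btup_lin.
  by rewrite scalerA mulfV // scale1r addr0 addrAC subrr add0r.
have itau0 : 0 < tau^-1 by rewrite invr_gt0.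
have fYt := F1core hOm hfb nc Oxt Ox hst S1lin (ltW itau0) S1b.
rewrite eYt in fYt; have {}fYt := fYt OYt.
pose S2 := fun u : H => lam *: u.
have S2lin : linop S2 by move=> a u w; rewrite /S2 scalerDr !scalerA mulrC.
have S2b : forall u, `|S2 u| <= lam * `|u|.
  by move=> u; rewrite /S2 normrZ gtr0_norm.
pose Cb := fun j u => Yt j (S2 u) + @tzero _ H d j u - S2 (Y j u).
have Cbe : forall j u, Cb j u = lam *: (Yt j u - Y j u).
  move=> j u; rewrite /Cb /S2 /tzero (lin_scale (Yt j)); last exact: btup_lin.
  by rewrite addr0 scalerBr.
have bCb : btup Cb.
  have -> : Cb = (fun j u => lam *: Yt j u + (- lam) *: Y j u).
    by apply: funext => ?; apply: funext => ?; rewrite Cbe scalerBr scaleNr.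
  exact: (tcomb_btup lam (- lam) bYt bY).
pose Bt := conj2 s2 t2 (blk Yt Cb Y).
have hCb : tnorm_le (tsub Cb (@tzero _ H d)) (lam * yb).
  move=> j' u'; rewrite /tsub /tzero subr0 Cbe normrZ gtr0_norm // -mulrA.
  by apply: ler_wpM2l; [apply: ltW|apply: hYd].
have lyb0 : 0 <= lam * yb by apply: mulr_ge0 => //; apply: ltW.
have OBt : Omk kY.+1 Bt.
  apply: heD; first exact: conj2_btup hst2 bYt bCb bY.
  move=> j u; rewrite /tsub (conj2_diff j u hst2).
  apply: le_trans (conj2_le hMs2 hMt2 Ms20 Mt20 yb0 lyb0 (lexx 0) hYd hCb (tnorm_sub0 Y) j u) _.
  apply: ler_wpM2r => //; apply: le_trans c4; rewrite ybe.
  by rewrite le_eqVlt; apply/orP; left; apply/eqP; ring.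
have fBt := F1core hOm hfb nc OYt OY hst2 S2lin (ltW lam0) S2b (sub _ _ OBt).
have bfYt := hfb _ OYt.
have hext : forall w, `|f Yt i w - f Y i w| <= eps * (Ms2 * (M1 * Mt2)) * `|w|.
  move=> w.
  have e := congr1 (fun Fn => s2 (Fn i (t2 (0, w)))) fBt.
  have [_ [_ [_ [_ [_ st2]]]]] := hst2.
  rewrite /= /conj2 /blk /= !st2 /= in e.
  rewrite /S2 (lin_scale (f Yt i)) in e; last exact: btup_lin.
  rewrite (lin_0 (f Yt i)) in e; last exact: btup_lin.
  rewrite /tzero add0r addr0 -scalerBr in e.
  have hq := (hMs2 (f Bt i (t2 (0, w)))).1; rewrite e /= normrZ gtr0_norm // in hq.
  have hq2 : `|f Bt i (t2 (0, w))| <= M1 * (Mt2 * `|w|).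
    apply: le_trans (hM1 _ OBt i _) _; apply: ler_wpM2l => //.
    by apply: le_trans (hMt2 _) _; rewrite /= normr0 add0r.
  have hq3 := le_trans hq (ler_wpM2l Ms20 hq2).
  have -> : `|f Yt i w - f Y i w| = eps * (lam * `|f Yt i w - f Y i w|).
    by rewrite mulrA /lam mulfV ?mul1r // gt_eqF.
  rewrite -!mulrA; apply: ler_wpM2l; first exact: ltW.
  by apply: le_trans hq3 _; rewrite !mulrA.
have hFx : tnorm_le (tsub (f xt) F) eps.
  move=> j u; rewrite /tsub.
  have -> : f xt j u - F j u = (f xt j u - F j u - tau *: Dh j u) + tau *: Dh j u by rewrite subrK.
  apply: le_trans (ler_normD _ _) _.
  have e2 : `|tau *: Dh j u| <= tau * (cD * `|u|).
    by rewrite normrZ gtr0_norm //; apply: ler_wpM2l; [apply: ltW|apply: hcD].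
  apply: le_trans (lerD (hF j u) e2) _.
  have -> : eps * (tau * ch) * `|u| + tau * (cD * `|u|) = (eps * (tau * ch) + tau * cD) * `|u| by ring.
  apply: ler_wpM2r => //; apply: le_trans c5; rewrite mulrDr lerD2r.
  by apply: ler_piMl => //; apply: mulr_ge0 => //; apply: ltW.
pose Q := fun j u => f xt j (S1 u) + @tzero _ H r j u - S1 (F j u).
have hQ : tnorm_le (tsub Q Dh) (eps * ch).
  move=> j u; rewrite /tsub /Q /S1 /tzero (lin_scale (f xt j)); last exact: (btup_lin _ _ j (hfb _ Oxt)).
  have -> : tau^-1 *: f xt j u + 0 - tau^-1 *: F j u - Dh j u =
            tau^-1 *: (f xt j u - F j u - tau *: Dh j u).
    by rewrite !scalerBr scalerA mulVf // scale1r addr0.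
  rewrite normrZ gtr0_norm //; apply: le_trans (ler_wpM2l (ltW itau0) (hF j u)) _.
  by rewrite le_eqVlt; apply/orP; left; apply/eqP; field.
have hv1 : `|f Y i v - f Yt i v| <= eps * (Ms2 * (M1 * Mt2)) * `|v| by rewrite distrC; apply: hext.
have hv2 := conj2_le hMs hMt Ms0 Mt0 (ltW eps0) (mulr_ge0 (ltW eps0) ch0) (lexx 0) hFx hQ (tnorm_sub0 F) i v.
rewrite -(conj2_diff i v hst) -fYt in hv2.
have -> : f Y i v - conj2 s t (blk F Dh F) i v =
          (f Y i v - f Yt i v) + (f Yt i v - conj2 s t (blk F Dh F) i v) by rewrite addrA subrK.
apply: le_trans (ler_normD _ _) _; apply: le_trans (lerD hv1 hv2) _.
by rewrite le_eqVlt; apply/orP; left; apply/eqP; ring.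
Qed.
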